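(* Let $(X,E,\ell)$ be a weighted tree and let $x\in X$. (a) If $\sum_{e\ni x}\frac{1}{1+e^{-\ell(e)}}\le\deg(x)-1$, then $x$ does not belong to the support of the diversity-maximizing measure of $X$. (b) If $\ell(e)\le\log 2$ for all $e\in E$, then no branch point of $X$ (vertex of degree at least $3$) belongs to the support of the diversity-maximizing measure of $X$.
   Context: A weighted tree is a triple $(X,E,\ell)$ with $(X,E)$ a finite simple undirected graph that is a tree and $\ell\colon E\to(0,\infty)$ edge lengths; the vertex set $X$ is a metric space with $d(x,y)$ the total length of the unique simple path between $x$ and $y$. $\deg x$ is the number of neighbours of $x$; $\sum_{e\ni x}$ is over edges containing $x$. The diversity-maximizing measure is the unique probability measure $\mu$ on $X$ minimizing $\sum_{x,y\in X}e^{-d(x,y)}\mu(x)\mu(y)$; its support is $\{x:\mu(x)>0\}$. *)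

(* Defs.v *)
From HB Require Import structures.
From mathcomp Require Import all_boot all_order all_algebra.
From mathcomp Require Import reals sequences exp.
From Stdlib Require Import ClassicalEpsilon.
Set Implicit Arguments. Unset Strict Implicit. Unset Printing Implicit Defensive.
Import Order.TTheory GRing.Theory Num.Theory.
Local Open Scope ring_scope.

Section WeightedTree.
Variables (R : realType) (T : finType).

(* A finite simple undirected graph on vertex set T: symmetric irreflexive
   adjacency relation.  The edge {x,y} has length ell x y (values of ell on
   non-adjacent pairs are irrelevant). *)
Definition simple_graph (adj : rel T) : Prop :=
  (forall x y, adj x y = adj y x) /\ (forall x, ~~ adj x x).

Definition simple_path (adj : rel T) (x y : T) (p : seq T) : bool :=
  [&& path adj x p, last x p == y & uniq (x :: p)].

Definition is_tree (adj : rel T) : Prop :=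
  simple_graph adj /\
  (forall x y, exists p, simple_path adj x y p) /\
  (forall x y p q, simple_path adj x y p -> simple_path adj x y q -> p = q).

Definition weighted_tree (adj : rel T) (ell : T -> T -> R) : Prop :=
  is_tree adj /\
  (forall x y, adj x y -> 0 < ell x y) /\
  (forall x y, adj x y -> ell x y = ell y x).

Definition path_length (ell : T -> T -> R) (x : T) (p : seq T) : R :=
  \sum_(e <- zip (x :: p) p) ell e.1 e.2.

Definition the_path (adj : rel T) (x y : T) : seq T :=
  epsilon (inhabits [::]) (fun p => simple_path adj x y p).

Definition tree_dist (adj : rel T) (ell : T -> T -> R) (x y : T) : R :=
  path_length ell x (the_path adj x y).

Definition deg (adj : rel T) (x : T) : nat := #|[set y | adj x y]|.

Definition is_prob (mu : T -> R) : Prop :=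
  (forall x, 0 <= mu x) /\ \sum_(x : T) mu x = 1.

Definition simil_form (adj : rel T) (ell : T -> T -> R) (mu : T -> R) : R :=
  \sum_(x : T) \sum_(y : T) expR (- tree_dist adj ell x y) * mu x * mu y.

(* mu is a (the) diversity-maximizing measure: a probability measure
   minimizing the quadratic form among all probability measures. *)
Definition diversity_maximizing (adj : rel T) (ell : T -> T -> R)
    (mu : T -> R) : Prop :=
  is_prob mu /\
  forall nu, is_prob nu -> simil_form adj ell mu <= simil_form adj ell nu.

End WeightedTree.

(* Main.v *)
Require Import Defs.
From HB Require Import structures.
From mathcomp Require Import all_boot all_order all_algebra.
From mathcomp Require Import reals sequences exp.
From Stdlib Require Import ClassicalEpsilon.
From mathcomp Require Import ring lra.
Import Order.TTheory GRing.Theory Num.Theory.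
Local Open Scope ring_scope.

Lemma the_path_spec (T : finType) (adj : rel T) x z :
  is_tree adj -> simple_path adj x z (the_path adj x z).
Proof.
move=> [_ [ex _]]; exact: (epsilon_spec (inhabits [::]) (fun p => simple_path adj x z p) (ex x z)).
Qed.

Lemma dist_of_path (R : realType) (T : finType) (adj : rel T) (ell : T -> T -> R) x z p :
  is_tree adj -> simple_path adj x z p -> tree_dist adj ell x z = path_length ell x p.
Proof.
move=> tr sp; rewrite /tree_dist.
by have [_ [_ un]] := tr; rewrite (un _ _ _ _ (@the_path_spec _ adj x z tr) sp).
Qed.

Lemma path_length_cons (R : realType) (T : finType) (ell : T -> T -> R) x y p :
  path_length ell x (y :: p) = ell x y + path_length ell y p.
Proof. by rewrite /path_length /= big_cons. Qed.

Lemma path_length_rcons (R : realType) (T : finType) (ell : T -> T -> R) x p y :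
  path_length ell x (rcons p y) = path_length ell x p + ell (last x p) y.
Proof.
elim: p x => [|a p IH] x.
  by rewrite /path_length /= big_cons big_nil add0r addr0.
by rewrite /= !path_length_cons IH addrA.
Qed.

Lemma path_length_rev (R : realType) (T : finType) (adj : rel T) (ell : T -> T -> R) x p :
  (forall a b, adj a b -> ell a b = ell b a) -> path adj x p ->
  path_length ell (last x p) (rev (belast x p)) = path_length ell x p.
Proof.
move=> es; elim: p x => [|a p IH] x //= /andP[hxa hp].
rewrite rev_cons path_length_rcons IH // path_length_cons addrC.
congr (_ + _).
have -> : last (last a p) (rev (belast a p)) = a.
  by case/lastP: p {IH hp} => [|q b] //=; rewrite last_rcons belast_rcons rev_cons last_rcons.
by rewrite (es _ _ hxa).
Qed.

Lemma dist_sym (R : realType) (T : finType) (adj : rel T) (ell : T -> T -> R) x z :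
  weighted_tree adj ell -> tree_dist adj ell x z = tree_dist adj ell z x.
Proof.
move=> [tr [_ es]]; have [[sym _] _] := tr.
have /and3P[hp hl hu] := @the_path_spec _ adj x z tr.
rewrite (@dist_of_path _ _ adj ell x z _ tr (@the_path_spec _ adj x z tr)).
set p := the_path adj x z in hp hl hu *.
have sp : simple_path adj z x (rev (belast x p)).
  apply/and3P; split.
  - rewrite -(eqP hl) rev_path.
    by rewrite (@eq_path _ _ adj) // => a b; rewrite sym.
  - case/lastP: p hl {hp hu} => [|q b] /= hl; first by rewrite (eqP hl).
    by rewrite belast_rcons rev_cons last_rcons.
  - rewrite -rev_rcons -(eqP hl) -lastI rev_uniq //.
rewrite (@dist_of_path _ _ adj ell z x _ tr sp) -(eqP hl) (@path_length_rev _ _ adj) //.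
Qed.

Lemma branch (R : realType) (T : finType) (adj : rel T) (ell : T -> T -> R) x y z :
  weighted_tree adj ell -> adj x y ->
  tree_dist adj ell y z =
  if ohead (the_path adj x z) == Some y then tree_dist adj ell x z - ell x y
  else tree_dist adj ell x z + ell x y.
Proof.
move=> [tr [_ es]] hxy; have [[sym irr] [_ un]] := tr.
have sp := @the_path_spec _ adj x z tr.
rewrite (@dist_of_path _ _ adj ell x z _ tr sp).
move: (the_path adj x z) sp => p sp.
case: ifP => hh.
  case: p sp hh => [|y' p'] //= sp /eqP [<-].
  have sp' : simple_path adj y' z p'.
    by move: sp => /and3P[/= /andP[_ h1] h2 /= /andP[_ h3]]; apply/and3P.
  by rewrite (@dist_of_path _ _ adj ell y' z _ tr sp') path_length_cons addrC addKr.
have xy : x != y by apply/eqP => E; move: hxy (irr x); rewrite E => ->.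
have ynp : y \notin p.
  apply/negP => yp; move: sp hh; case/splitPr: yp => p1 p2 sp2 hh2.
  have s1 : simple_path adj x y (rcons p1 y).
    move: sp2 => /and3P[hp _ hu]; apply/and3P; split.
    - by move: hp; rewrite -cat_rcons cat_path => /andP[].
    - by rewrite last_rcons.
    - by move: hu; rewrite -cat_rcons -cat_cons cat_uniq => /andP[].
  have s2 : simple_path adj x y [:: y].
    by apply/and3P; split => //=; rewrite ?hxy // inE andbT.
  have := un _ _ _ _ s1 s2; case: p1 {s1 sp2} hh2 => [|a [|b q]] //=.
  by rewrite eqxx.
have sp' : simple_path adj y z (x :: p).
  move: sp => /and3P[h1 h2 h3]; apply/and3P; split => //=.
  - by rewrite sym hxy.
  - by rewrite inE negb_or eq_sym xy ynp.
by rewrite (@dist_of_path _ _ adj ell y z _ tr sp') path_length_cons (es _ _ hxy) addrC.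
Qed.

Lemma key (R : realType) (T : finType) (adj : rel T) (ell : T -> T -> R) x z :
  weighted_tree adj ell ->
  (1 + \sum_(y | adj x y) expR (- ell x y) ^+ 2 / (1 - expR (- ell x y) ^+ 2))
     * expR (- tree_dist adj ell x z)
  - \sum_(y | adj x y) expR (- ell x y) / (1 - expR (- ell x y) ^+ 2)
       * expR (- tree_dist adj ell y z) = (z == x)%:R.
Proof.
move=> wt; have [tr [pos es]] := wt.
have qlt : forall y, adj x y -> 1 - expR (- ell x y) ^+ 2 != 0.
  move=> y hy; rewrite subr_eq0 eq_sym; apply/negP => /eqP h.
  have : expR (- ell x y) < 1 by rewrite expR_lt1 oppr_lt0 pos.
  have : 0 < expR (- ell x y) by apply: expR_gt0.
  move: h; set a := expR _ => h h0 h1.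
  rewrite expr2 in h; nra.
rewrite [X in _ - X](eq_bigr (fun y => expR (- ell x y) / (1 - expR (- ell x y) ^+ 2) *
   (if ohead (the_path adj x z) == Some y then expR (- tree_dist adj ell x z) / expR (- ell x y)
    else expR (- tree_dist adj ell x z) * expR (- ell x y)))); last first.
  move=> y hy; rewrite (@branch _ _ adj ell x y z wt hy); case: ifP => _.
    by congr (_ * _); rewrite opprB addrC expRD; congr (_ * _); rewrite expRN invrK.
  by rewrite opprD expRD.
have sp := @the_path_spec _ adj x z tr.
move: sp; case Ep: (the_path adj x z) => [|y0 p] sp.
  have zx : z = x by move: sp => /and3P[_ /eqP <- _].
  have d0 : tree_dist adj ell x z = 0.
    by rewrite (@dist_of_path _ _ adj ell x z _ tr sp) /path_length big_nil.
  rewrite d0 zx eqxx oppr0 expR0 mulr1 -addrA -sumrB big1 ?addr0 // => y hy.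
  by rewrite /= mul1r [X in _ - X]mulrAC -expr2 subrr.
move: sp => /and3P[/= /andP[h0 _] hl hu].
have zx : (z == x) = false.
  apply/negP => /eqP zx; move/eqP: hl => /= hl.
  have := mem_last y0 p; rewrite hl zx => hm.
  by move: hu => /andP[/negP].
rewrite zx (bigD1 y0 h0) [X in _ - X](bigD1 y0 h0) /= eqxx.
set E := expR (- tree_dist adj ell x z).
have -> : \sum_(i | adj x i && (i != y0))
     expR (- ell x i) / (1 - expR (- ell x i) ^+ 2) *
     (if Some y0 == Some i then E / expR (- ell x i) else E * expR (- ell x i))
   = E * \sum_(i | adj x i && (i != y0)) expR (- ell x i) ^+ 2 / (1 - expR (- ell x i) ^+ 2).
  rewrite big_distrr; apply: eq_bigr => i /andP[hi ne].
  have -> : (Some y0 == Some i) = false.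
    by apply/eqP => -[e]; rewrite e eqxx in ne.
  have := qlt i hi; set q := expR _ => hq.
  change (q / (1 - q ^+ 2) * (E * q) = E * (q ^+ 2 / (1 - q ^+ 2))); field; by rewrite hq.
have := qlt y0 h0; have : expR (- ell x y0) != 0 by rewrite gt_eqF // expR_gt0.
set q := expR (- ell x y0); set S := \sum_(i | _) _ => hq0 hq.
change ((1 + (q ^+ 2 / (1 - q ^+ 2) + S)) * E - (q / (1 - q ^+ 2) * (E / q) + E * S) = 0); field; by rewrite hq0 hq.
Qed.

Set Implicit Arguments. Unset Strict Implicit.

Definition Bf (R : realType) (T : finType) (adj : rel T) (ell : T -> T -> R) (f g : T -> R) : R :=
  \sum_(x : T) \sum_(y : T) expR (- tree_dist adj ell x y) * f x * g y.

Definition Wf (R : realType) (T : finType) (adj : rel T) (ell : T -> T -> R) (g : T -> R) (x : T) : R :=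
  \sum_(y : T) expR (- tree_dist adj ell x y) * g y.

Lemma Bf_W (R : realType) (T : finType) (adj : rel T) (ell : T -> T -> R) f g :
  Bf adj ell f g = \sum_x f x * Wf adj ell g x.
Proof.
apply: eq_bigr => x _; rewrite /Wf big_distrr; apply: eq_bigr => y _ /=.
by rewrite mulrCA mulrA.
Qed.

Lemma Bf_sym (R : realType) (T : finType) (adj : rel T) (ell : T -> T -> R) f g :
  weighted_tree adj ell -> Bf adj ell f g = Bf adj ell g f.
Proof.
move=> wt; rewrite /Bf exchange_big; apply: eq_bigr => y _; apply: eq_bigr => x _.
by rewrite (@dist_sym _ _ adj ell x y wt) mulrAC.
Qed.

Lemma Q_expand (R : realType) (T : finType) (adj : rel T) (ell : T -> T -> R) f h t :
  simil_form adj ell (fun x => f x + t * h x) =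
  Bf adj ell f f + t * (Bf adj ell f h + Bf adj ell h f) + t ^+ 2 * Bf adj ell h h.
Proof.
rewrite /simil_form /Bf.
transitivity (\sum_x (\sum_y expR (- tree_dist adj ell x y) * f x * f y +
   t * (\sum_y expR (- tree_dist adj ell x y) * f x * h y +
        \sum_y expR (- tree_dist adj ell x y) * h x * f y) +
   t ^+ 2 * \sum_y expR (- tree_dist adj ell x y) * h x * h y)).
  apply: eq_bigr => x _.
  rewrite mulrDr !big_distrr -!big_split /=; apply: eq_bigr => y _.
  ring.
by rewrite !big_split /= -!big_distrr /= big_split.
Qed.

Lemma small_t (R : realType) (L C : R) :
  (forall t : R, 0 < t -> t <= 1 -> 0 <= t * L + t ^+ 2 * C) -> 0 <= L.
Proof.
move=> H; rewrite leNgt; apply/negP => hL.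
set t := - L / (- L + `|C| + 1).
have hd : 0 < - L + `|C| + 1 by have := normr_ge0 C; lra.
have ht : t * (- L + `|C| + 1) = - L by rewrite /t mulrVK // unitfE gt_eqF.
have t0 : 0 < t by rewrite /t divr_gt0 // oppr_gt0.
have t1 : t <= 1 by rewrite /t ler_pdivrMr // mul1r; have := normr_ge0 C; lra.
have := H t t0 t1.
have hC : C <= `|C| := ler_norm C.
have : t ^+ 2 * C <= t ^+ 2 * `|C| by rewrite ler_wpM2l // exprn_ge0 // ltW.
rewrite expr2; nra.
Qed.

Lemma kkt (R : realType) (T : finType) (adj : rel T) (ell : T -> T -> R) (mu : T -> R) :
  weighted_tree adj ell -> diversity_maximizing adj ell mu ->
  forall a, simil_form adj ell mu <= Wf adj ell mu a.
Proof.
move=> wt [[mu0 mu1] opt] a.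
set h := fun x : T => (x == a)%:R - mu x.
have hW : Bf adj ell h mu = Wf adj ell mu a - simil_form adj ell mu.
  rewrite Bf_W /h (eq_bigr (fun x => (x == a)%:R * Wf adj ell mu x - mu x * Wf adj ell mu x));
    last by move=> x _; rewrite mulrBl.
  rewrite sumrB (bigD1 a) //= eqxx mul1r big1 ?addr0; last first.
    by move=> x /negbTE ->; rewrite mul0r.
  by rewrite -Bf_W.
suff : 0 <= 2 * (Wf adj ell mu a - simil_form adj ell mu) by lra.
apply: (@small_t _ _ (Bf adj ell h h)) => t t0 t1.
have pr : is_prob (fun x => mu x + t * h x).
  split.
    move=> x; rewrite /h; have := mu0 x; case: (x == a) => /=; nra.
  rewrite big_split /= -big_distrr /= /h sumrB mu1 (bigD1 a) //= eqxx big1 ?addr0.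
    by rewrite subrr mulr0 addr0.
  by move=> x /negbTE ->.
have := opt _ pr; rewrite Q_expand.
rewrite (@Bf_sym _ _ adj ell mu h wt) hW.
have -> : simil_form adj ell mu = Bf adj ell mu mu by [].
move=> H.
suff: 0 <= t * (2 * (Wf adj ell mu a - Bf adj ell mu mu)) + t ^+ 2 * Bf adj ell h h by [].
lra.
Qed.

Lemma identity (R : realType) (T : finType) (adj : rel T) (ell : T -> T -> R) (mu : T -> R) x :
  weighted_tree adj ell ->
  mu x = (1 + \sum_(y | adj x y) expR (- ell x y) ^+ 2 / (1 - expR (- ell x y) ^+ 2))
           * Wf adj ell mu x
         - \sum_(y | adj x y) expR (- ell x y) / (1 - expR (- ell x y) ^+ 2) * Wf adj ell mu y.
Proof.
move=> wt.
have E1 : \sum_z mu z * (z == x)%:R = mu x.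
  rewrite (bigD1 x) //= eqxx mulr1 big1 ?addr0 //.
  by move=> z /negbTE ->; rewrite mulr0.
rewrite -E1 (eq_bigr _ (fun z _ => congr1 (fun r => mu z * r) (esym (@key _ _ adj ell x z wt)))).
rewrite (eq_bigr (fun z => (1 + \sum_(y | adj x y) expR (- ell x y) ^+ 2 / (1 - expR (- ell x y) ^+ 2))
     * (expR (- tree_dist adj ell x z) * mu z) -
   \sum_(y | adj x y) expR (- ell x y) / (1 - expR (- ell x y) ^+ 2) *
     (expR (- tree_dist adj ell y z) * mu z))); last first.
  move=> z _; rewrite mulrBr mulr_sumr; congr (_ - _); first by ring.
  by apply: eq_bigr => y _; ring.
rewrite sumrB -mulr_sumr exchange_big /=; congr (_ - _).
by apply: eq_bigr => y _; rewrite /Wf mulr_sumr.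
Qed.

Lemma partA (R : realType) (T : finType) (adj : rel T) (ell : T -> T -> R) (mu : T -> R) :
  weighted_tree adj ell -> diversity_maximizing adj ell mu ->
  forall x : T,
      \sum_(y : T | adj x y) (1 + expR (- ell x y))^-1 <= (deg adj x)%:R - 1 ->
      mu x = 0.
Proof.
move=> wt dm x hx; have [[mu0 mu1] _] := dm; have [_ [pos _]] := wt.
set lam := simil_form adj ell mu.
set W := Wf adj ell mu.
have W0 : forall v, 0 <= W v.
  by move=> v; apply: sumr_ge0 => z _; rewrite mulr_ge0 ?expR_ge0 ?mu0.
have lamW : lam = \sum_v mu v * W v by rewrite /lam -Bf_W.
have lam0 : 0 <= lam by rewrite lamW; apply: sumr_ge0 => v _; rewrite mulr_ge0.
have K := kkt wt dm.
have slack : forall a, mu a * (W a - lam) = 0.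
  move=> a0; apply: (@psumr_eq0P _ _ xpredT (fun a => mu a * (W a - lam))) => //.
    by move=> a _; rewrite mulr_ge0 // subr_ge0 K.
  rewrite (eq_bigr (fun a => mu a * W a - lam * mu a)); last by move=> a _; ring.
  by rewrite sumrB -mulr_sumr mu1 mulr1 lamW subrr.
have qf : forall y, adj x y -> 0 < expR (- ell x y) < 1.
  by move=> y hy; rewrite expR_gt0 expR_lt1 oppr_lt0 pos.
case: (eqVneq (mu x) 0) => // hne.
have mpos : 0 < mu x by rewrite lt_def hne mu0.
have Wx : W x = lam.
  have := slack x; move/eqP; rewrite mulf_eq0 (negbTE hne) /= subr_eq0 => /eqP //.
have id := @identity _ _ adj ell mu x wt; rewrite -/W Wx in id.
have hsum : (1 + \sum_(y | adj x y) expR (- ell x y) ^+ 2 / (1 - expR (- ell x y) ^+ 2)) * lam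
   - \sum_(y | adj x y) expR (- ell x y) / (1 - expR (- ell x y) ^+ 2) * W y
   = lam * (1 + \sum_(y | adj x y) ((1 + expR (- ell x y))^-1 - 1))
     - \sum_(y | adj x y) expR (- ell x y) / (1 - expR (- ell x y) ^+ 2) * (W y - lam).
  have e1 : \sum_(y | adj x y) expR (- ell x y) / (1 - expR (- ell x y) ^+ 2) * (W y - lam) =
     \sum_(y | adj x y) expR (- ell x y) / (1 - expR (- ell x y) ^+ 2) * W y -
     lam * \sum_(y | adj x y) expR (- ell x y) / (1 - expR (- ell x y) ^+ 2).
    rewrite mulr_sumr -sumrB; apply: eq_bigr => y _; ring.
  have e2 : \sum_(y | adj x y) ((1 + expR (- ell x y))^-1 - 1) =
     \sum_(y | adj x y) expR (- ell x y) ^+ 2 / (1 - expR (- ell x y) ^+ 2) -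
     \sum_(y | adj x y) expR (- ell x y) / (1 - expR (- ell x y) ^+ 2).
    rewrite -sumrB; apply: eq_bigr => y hy.
    have /andP[q0 q1] := qf y hy; set q := expR _ in q0 q1 *.
    have hq : 1 - q ^+ 2 != 0 by rewrite expr2; apply/negP => /eqP h; nra.
    have hq' : 1 + q != 0 by apply/negP => /eqP h; lra.
    by field; rewrite hq hq'.
  rewrite e1 e2.
  move: (\sum_(y | adj x y) expR (- ell x y) ^+ 2 / (1 - expR (- ell x y) ^+ 2)) => A.
  move: (\sum_(y | adj x y) expR (- ell x y) / (1 - expR (- ell x y) ^+ 2) * W y) => B.
  move: (\sum_(y | adj x y) expR (- ell x y) / (1 - expR (- ell x y) ^+ 2)) => C.
  ring.
have b0 : 0 <= \sum_(y | adj x y) expR (- ell x y) / (1 - expR (- ell x y) ^+ 2) * (W y - lam).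
  apply: sumr_ge0 => y hy; have /andP[q0 q1] := qf y hy.
  apply: mulr_ge0; last by rewrite subr_ge0 K.
  apply: divr_ge0; first exact: ltW.
  rewrite expr2; nra.
have hd : \sum_(y | adj x y) ((1 + expR (- ell x y))^-1 - 1) =
   \sum_(y | adj x y) (1 + expR (- ell x y))^-1 - (deg adj x)%:R.
  rewrite sumrB; congr (_ - _).
  rewrite /deg -sum1_card natr_sum.
  by apply: eq_bigl => y; rewrite inE.
have : mu x <= 0.
  rewrite id hsum hd.
  have : 1 + (\sum_(y | adj x y) (1 + expR (- ell x y))^-1 - (deg adj x)%:R) <= 0 by lra.
  move=> h; have : lam * (1 + (\sum_(y | adj x y) (1 + expR (- ell x y))^-1 - (deg adj x)%:R)) <= 0.
    by rewrite mulr_ge0_le0.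
  lra.
lra.
Qed.

Unset Implicit Arguments. Set Strict Implicit.

Theorem corollary4p3 (R : realType) (T : finType) (adj : rel T)
    (ell : T -> T -> R) (mu : T -> R) :
  weighted_tree adj ell ->
  diversity_maximizing adj ell mu ->
  (forall x : T,
      \sum_(y : T | adj x y) (1 + expR (- ell x y))^-1 <= (deg adj x)%:R - 1 ->
      mu x = 0) /\
  ((forall x y : T, adj x y -> ell x y <= ln 2) ->
      forall x : T, (3 <= deg adj x)%N -> mu x = 0).
Proof.
move=> wt dm; split; first exact: partA.
move=> hl x hd; apply: (partA wt dm).
have e2 : expR (- ln (2 : R)) = 2^-1.
  by rewrite expRN lnK // posrE.
have t : forall y, adj x y -> (1 + expR (- ell x y))^-1 <= 2 / 3.
  move=> y hy.
  have : 2^-1 <= expR (- ell x y) by rewrite -e2 ler_expR lerN2 hl.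
  move=> h; have hp : 0 < 1 + expR (- ell x y) by have := expR_gt0 (- ell x y); lra.
  have hv : (1 + expR (- ell x y))^-1 * (1 + expR (- ell x y)) = 1 by rewrite mulVf // gt_eqF.
  have hv0 : 0 < (1 + expR (- ell x y))^-1 by rewrite invr_gt0.
  move: hv hv0 h; move: (1 + expR (- ell x y))^-1 => v; move: (expR (- ell x y)) => q.
  move=> *; nra.
apply: (@le_trans _ _ (\sum_(y | adj x y) (2 / 3 : R))).
  exact: ler_sum.
have -> : \sum_(y | adj x y) (2 / 3 : R) = (deg adj x)%:R * (2 / 3).
  rewrite /deg -sum1_card natr_sum mulr_suml; apply: eq_big => [y|y _]; first by rewrite inE.
  by rewrite mul1r.
have : (3 : R) <= (deg adj x)%:R by rewrite (ler_nat R 3).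
lra.
Qed.
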